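(* Let $r\ge1$ and $n\ge2r$. For every integer $p\ge1$, the restricted Casimir polynomial $C_p(x_1,\dots,x_r)$ lies in the subalgebra $$\mathbb{C}\bigl[\,p_{2k}(x_1+\rho_1,\dots,x_r+\rho_r)\;:\;1\le k\le \lfloor p/2\rfloor\,\bigr]$$ of $\mathbb{C}[x_1,\dots,x_r]$ generated by constants and these even power sums.
   Context: $\rho_i=\frac{n-(2i-1)}{2}$ for $1\le i\le r$, and $p_k(y_1,\dots,y_r)=\sum_j y_j^k$. Casimir eigenvalues. For $\nu=(\nu_1,\dots,\nu_n)$ and an integer $p\ge 0$, let $$c_p(\nu)=\sum_{i=1}^n(\nu_i+n-i)^p\prod_{j\ne i}\Bigl(1-\frac{1}{\nu_i-\nu_j+j-i}\Bigr).$$ This rational expression is in fact a polynomial in $\nu$; it is the eigenvalue of the higher Casimir operator $\mathrm{tr}(\mathbf E^p)$ of $\mathfrak{gl}_n$ on the irreducible module of highest weight $\nu$. The restricted Casimir polynomial is $$C_p(x_1,\dots,x_r)=c_p(x_1,\dots,x_r,\underbrace{0,\dots,0}_{n-2r},-x_r,\dots,-x_1).$$ *)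

(* Defs.v *)
From HB Require Import structures.
From mathcomp Require Import all_boot all_order all_algebra all_field.
Unset Implicit Arguments. Unset Printing Implicit Defensive.
Import Order.TTheory GRing.Theory Num.Theory.
Local Open Scope ring_scope.

Definition xext (r : nat) (x : 'I_r -> algC) (k : nat) : algC :=
  odflt 0 (omap x (insub k)).

(* nu = (x_1,...,x_r, 0,...,0, -x_r,...,-x_1), 0-based positions i < n *)
Definition nu (n r : nat) (x : 'I_r -> algC) (i : 'I_n) : algC :=
  if (i < r)%N then xext r x i
  else if (n - r <= i)%N then - xext r x (n.-1 - i)
  else 0.

(* c_p(nu) = sum_i (nu_i + n - i)^p prod_{j<>i} (1 - 1/(nu_i - nu_j + j - i)),
   written with 0-based indices (1-based i becomes i+1, so n - i becomes n-1-i). *)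
Definition casimir (n p : nat) (v : 'I_n -> algC) : algC :=
  \sum_(i < n) (v i + (n.-1 - i)%:R) ^+ p *
     \prod_(j < n | j != i) (1 - (v i - v j + j%:R - i%:R)^-1).

(* points where none of the denominators of c_p(nu) vanish *)
Definition generic (n r : nat) (x : 'I_r -> algC) : Prop :=
  forall i j : 'I_n, i != j -> nu n r x i - nu n r x j + j%:R - i%:R != 0.

(* rho_{k+1} = (n - (2(k+1) - 1))/2 for 0-based k *)
Definition rho (n k : nat) : algC := (n%:R - (2 * k + 1)%:R) / 2%:R.

Definition powsum (r k : nat) (y : 'I_r -> algC) : algC := \sum_(i < r) y i ^+ k.

(* evaluation of a polynomial in m variables given as a finite list of
   (coefficient, exponent vector) monomials at the point g *)
Definition mpoly_eval (m : nat) (Q : seq (algC * ('I_m -> nat))) (g : 'I_m -> algC) : algC :=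
  \sum_(t <- Q) t.1 * \prod_(k < m) g k ^+ t.2 k.

(* Main.v *)
Require Import Defs.
From HB Require Import structures.
From mathcomp Require Import all_boot all_order all_algebra all_field.
From mathcomp Require Import zify ring.
Import Order.TTheory GRing.Theory Num.Theory.
Local Open Scope ring_scope.


Definition ww (ys : seq algC) (y : algC) := \prod_(b <- ys | b != y) (1 - (y - b)^-1).
Definition SS ys m := \sum_(y <- ys) ww ys y * y ^+ m.
Definition gg ys M := if M is M'.+1 then - SS ys M' else 1.
Definition cs (a : algC) k := if k is k'.+1 then - a ^+ k' else 1.

Lemma ww_head a ys : a \notin ys -> ww (a :: ys) a = \prod_(b <- ys) (1 - (a - b)^-1).
Proof.
move=> Ha; rewrite /ww big_cons eqxx /= big_seq_cond [RHS]big_seq.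
apply: eq_bigl => b; case Hb: (b \in ys) => //=.
by apply/eqP => E; move: Ha; rewrite -E Hb.
Qed.

Lemma ww_tail a ys y : a \notin ys -> y \in ys -> ww (a :: ys) y = (1 - (y - a)^-1) * ww ys y.
Proof.
move=> Ha Hy; rewrite /ww big_cons.
case: eqP => // E; by rewrite E Hy in Ha.
Qed.

Lemma PF ys u : uniq ys -> u \notin ys ->
  \prod_(b <- ys) (1 - (u - b)^-1) = 1 - \sum_(y <- ys) ww ys y / (u - y).
Proof.
elim: ys u => [|a ys IH] u; first by rewrite !big_nil subr0.
rewrite /= in_cons negb_or => /andP [Ha Hu] /andP [Hua Huy].
rewrite big_cons IH // big_cons ww_head // IH //.
rewrite [X in _ = 1 - (_ + X)](eq_big_seq (fun y => ww ys y / (u - y)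
   + ww ys y / (a - y) * (u - a)^-1 - ww ys y / (u - y) * (u - a)^-1)); last first.
  move=> y Hy; rewrite ww_tail //.
  have Hya : y - a != 0 by rewrite subr_eq0; apply/eqP => E; rewrite -E Hy in Ha.
  have Hay : a - y != 0 by rewrite subr_eq0; apply/eqP => E; rewrite E Hy in Ha.
  have Huy' : u - y != 0 by rewrite subr_eq0; apply/eqP => E; rewrite E Hy in Huy.
  have Hua' : u - a != 0 by rewrite subr_eq0.
  by field; rewrite Hua' Huy' Hay Hya.
rewrite sumrB big_split /= -!mulr_suml.
ring.
Qed.

Definition conv (f h : nat -> algC) M := \sum_(i < M.+1) f i * h (M - i)%N.
Definition NP (al f : nat -> algC) := forall M : nat,
  M%:R * f M = \sum_(k < M) al k.+1 * f (M - k.+1)%N.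

Lemma geomS (y a : algC) m : y != a ->
  \sum_(i < m) a ^+ i * y ^+ (m.-1 - i) = (y ^+ m - a ^+ m) / (y - a).
Proof.
move=> Hya; have H : y - a != 0 by rewrite subr_eq0.
rewrite subrXX mulrC mulKf //; apply: eq_bigr => i _; exact: mulrC.
Qed.

Lemma CV a ys M : uniq (a :: ys) -> gg (a :: ys) M = conv (cs a) (gg ys) M.
Proof.
rewrite /= => /andP [Ha Hu].
case: M => [|M]; first by rewrite /conv big_ord_recl big_ord0 /= mulr1 addr0.
rewrite /conv big_ord_recl /= big_ord_recr /= mul1r.
have -> : (M.+1 - bump 0 M = 0)%N by rewrite /bump /=; lia.
rewrite /= mulr1 add0n.
rewrite (eq_bigr (fun i : 'I_M => a ^+ i * SS ys (M.-1 - i))); last first.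
  move=> i _ /=; rewrite /bump /= add0n add1n subSS.
  have -> : (M - i = (M.-1 - i).+1)%N by have := ltn_ord i; lia.
  by rewrite /= mulrNN.
have E1 : \sum_(i < M) a ^+ i * SS ys (M.-1 - i)
   = \sum_(y <- ys) ww ys y * ((y ^+ M - a ^+ M) / (y - a)).
  rewrite /SS; under eq_bigr do rewrite mulr_sumr.
  rewrite exchange_big /=; apply: eq_big_seq => y Hy.
  have Hya : y != a by apply/eqP => E; move: Ha; rewrite -E Hy.
  rewrite -geomS // mulr_sumr; apply: eq_bigr => i _; ring.
rewrite E1 {E1} /SS big_cons ww_head // PF //.
rewrite [X in - (_ + X) = _](eq_big_seq (fun y => ww ys y * y ^+ M - ww ys y * ((y ^+ M - a ^+ M) / (y - a))
   + ww ys y / (a - y) * a ^+ M)); last first.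
  move=> y Hy; rewrite ww_tail //.
  have Hya : y - a != 0 by rewrite subr_eq0; apply/eqP => E; move: Ha; rewrite -E Hy.
  have Hay : a - y != 0 by rewrite subr_eq0; apply/eqP => E; move: Ha; rewrite E Hy.
  by field; rewrite Hya Hay.
rewrite big_split sumrB /= -mulr_suml.
rewrite /gg /SS. ring.
Qed.

Lemma NP_cs a : NP (fun k => a ^+ k - (a + 1) ^+ k) (cs a).
Proof.
case=> [|M]; first by rewrite mul0r big_ord0.
rewrite big_ord_recr /= subnn /= mulr1.
rewrite (eq_bigr (fun k : 'I_M => - (a ^+ k.+1 * a ^+ (M.-1 - k)) + (a + 1) ^+ k.+1 * a ^+ (M.-1 - k))); last first.
  move=> k _ /=; rewrite subSS.
  have -> : (M - k = (M.-1 - k).+1)%N by have := ltn_ord k; lia.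
  rewrite /=; ring.
rewrite big_split /= sumrN.
have EA : \sum_(k < M) a ^+ k.+1 * a ^+ (M.-1 - k) = M%:R * a ^+ M.
  rewrite (eq_bigr (fun _ => a ^+ M)); last first.
    by move=> k _; rewrite -exprD; congr (_ ^+ _); have := ltn_ord k; lia.
  by rewrite sumr_const card_ord mulr_natl.
have EB : \sum_(k < M) (a + 1) ^+ k.+1 * a ^+ (M.-1 - k) = (a + 1) ^+ M.+1 - a ^+ M.+1 - a ^+ M.
  have := subrXX a (a + 1) M.+1.
  rewrite big_ord_recl /= subn0 expr0 mulr1.
  have -> : a - (a + 1) = -1 by ring.
  rewrite mulN1r => H.
  have -> : \sum_(k < M) (a + 1) ^+ k.+1 * a ^+ (M.-1 - k) =
            \sum_(i < M) a ^+ (M - bump 0 i) * (a + 1) ^+ bump 0 i.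
    apply: eq_bigr => i _; rewrite /bump /= add1n mulrC (_ : (M - i.+1 = M.-1 - i)%N) //; lia.
  have E : (a + 1) ^+ M.+1 - a ^+ M.+1 = - (a ^+ M.+1 - (a + 1) ^+ M.+1) by ring.
  by rewrite E H; ring.
rewrite EA EB -addn1 natrD; ring.
Qed.

Lemma exch M (F : nat -> nat -> algC) :
  \sum_(0 <= i < M.+1) \sum_(0 <= k < M - i) F i k =
  \sum_(0 <= k < M) \sum_(0 <= i < M - k) F i k.
Proof.
rewrite (eq_bigr (fun i => \sum_(0 <= k < M) if (k < M - i)%N then F i k else 0)); last first.
  by move=> i _; rewrite (big_nat_widen _ _ M) ?leq_subr // big_mkcond.
rewrite exchange_big_nat; apply: eq_bigr => k _.
rewrite [RHS](big_nat_widen _ _ M.+1); last by lia.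
rewrite [RHS]big_mkcond; apply: eq_bigr => i _.
by rewrite (_ : (k < M - i) = (i < M - k))%N //; apply/idP/idP; lia.
Qed.

Lemma tri M (G : nat -> nat -> algC) :
  \sum_(0 <= i < M.+1) \sum_(0 <= k < i) G i k =
  \sum_(0 <= k < M) \sum_(0 <= j < M - k) G (j + k.+1)%N k.
Proof.
rewrite big_nat_cond.
rewrite (eq_bigr (fun i => \sum_(0 <= k < M) if (k < i)%N then G i k else 0)); last first.
  move=> i /andP [/andP [_ Hi] _].
  by rewrite (big_nat_widen _ _ M) ?big_mkcond.
rewrite -big_nat_cond exchange_big_nat; apply: eq_bigr => k _.
have -> : \sum_(0 <= i < M.+1) (if (k < i)%N then G i k else 0) = \sum_(k.+1 <= i < M.+1) G i k.
  by rewrite [RHS](big_nat_widenl _ 0) // big_mkcond.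
rewrite -[k.+1]add0n big_addn.
by rewrite subSS.
Qed.

Lemma NP_conv al be f h : NP al f -> NP be h -> NP (fun k => al k + be k) (conv f h).
Proof.
move=> Hf Hh M.
rewrite /conv mulr_sumr.
rewrite (eq_bigr (fun i : 'I_M.+1 => (i%:R * f i) * h (M - i)%N
     + f i * ((M - i)%N%:R * h (M - i)%N))); last first.
  move=> i _; have Hi := ltn_ord i.
  have -> : M%:R = i%:R + (M - i)%N%:R :> algC by rewrite -natrD subnKC // -ltnS.
  ring.
rewrite big_split /=.
have T1 : \sum_(i < M.+1) i%:R * f i * h (M - i)%N =
   \sum_(k < M) al k.+1 * \sum_(j < (M - k.+1).+1) f j * h (M - k.+1 - j)%N.
  rewrite (eq_bigr (fun i : 'I_M.+1 => \sum_(0 <= k < i) al k.+1 * f (i - k.+1)%N * h (M - i)%N)); last first.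
    by move=> i _; rewrite Hf big_mkord mulr_suml.
  rewrite -(big_mkord xpredT (fun i => \sum_(0 <= k < i) al k.+1 * f (i - k.+1)%N * h (M - i)%N)).
  rewrite tri big_mkord; apply: eq_bigr => k _.
  have Hk := ltn_ord k.
  rewrite (_ : (M - k.+1).+1 = M - k)%N; last by lia.
  rewrite big_mkord mulr_sumr; apply: eq_bigr => j _; have Hj := ltn_ord j.
  rewrite (_ : (j + k.+1 - k.+1 = j)%N); last by lia.
  rewrite (_ : (M - (j + k.+1) = M - k.+1 - j)%N); last by lia.
  by rewrite mulrA.
have T2 : \sum_(i < M.+1) f i * ((M - i)%N%:R * h (M - i)%N) =
   \sum_(k < M) be k.+1 * \sum_(j < (M - k.+1).+1) f j * h (M - k.+1 - j)%N.
  rewrite (eq_bigr (fun i : 'I_M.+1 => \sum_(0 <= k < M - i) f i * (be k.+1 * h (M - i - k.+1)%N))); last first.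
    by move=> i _; rewrite Hh big_mkord mulr_sumr.
  rewrite -(big_mkord xpredT (fun i => \sum_(0 <= k < M - i) f i * (be k.+1 * h (M - i - k.+1)%N))).
  rewrite exch big_mkord; apply: eq_bigr => k _.
  have Hk := ltn_ord k.
  rewrite (_ : (M - k.+1).+1 = M - k)%N; last by lia.
  rewrite big_mkord mulr_sumr; apply: eq_bigr => j _; have Hj := ltn_ord j.
  rewrite (_ : (M - j - k.+1 = M - k.+1 - j)%N); last by lia.
  ring.
rewrite T1 T2 -big_split /=; apply: eq_bigr => k _; ring.
Qed.

Definition qq (ys : seq algC) k := \sum_(y <- ys) (y ^+ k - (y + 1) ^+ k).

Lemma NP_ext al al' f f' : (forall k, al k = al' k) -> (forall M, f M = f' M) ->
  NP al f -> NP al' f'.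
Proof.
move=> Ha Hf H M; rewrite -Hf H; apply: eq_bigr => k _; by rewrite Ha Hf.
Qed.

Lemma NP_g ys : uniq ys -> NP (qq ys) (gg ys).
Proof.
elim: ys => [_|a ys IH Hu].
  case=> [|M]; first by rewrite mul0r big_ord0.
  rewrite /gg /SS big_nil oppr0 mulr0 big1 // => k _.
  by rewrite /qq big_nil mul0r.
have Hu' := Hu; rewrite /= in Hu'; case/andP: Hu' => Ha Hys.
apply: (@NP_ext (fun k => (a ^+ k - (a + 1) ^+ k) + qq ys k) _ (conv (cs a) (gg ys))).
- by move=> k; rewrite /qq big_cons.
- by move=> M; rewrite CV.
apply: NP_conv; [exact: NP_cs | exact: IH].
Qed.


Section RepTheory.
Variables (X : Type) (P : X -> Prop) (m : nat) (G : X -> 'I_m -> algC).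

Definition Rep (f : X -> algC) :=
  exists Q : seq (algC * ('I_m -> nat)), forall x, P x -> f x = mpoly_eval m Q (G x).

Lemma Rep_ext f f' : Rep f -> (forall x, P x -> f x = f' x) -> Rep f'.
Proof. by move=> [Q HQ] E; exists Q => x Hx; rewrite -E // HQ. Qed.

Lemma Rep_const c : Rep (fun _ => c).
Proof.
exists [:: (c, fun _ => 0%N)] => x _.
by rewrite /mpoly_eval big_cons big_nil addr0 /= big1 ?mulr1 // => k _; rewrite expr0.
Qed.

Lemma Rep_gen k : Rep (fun x => G x k).
Proof.
exists [:: (1, fun j => (j == k) : nat)] => x _.
rewrite /mpoly_eval big_cons big_nil addr0 /= mul1r (bigD1 k) //= eqxx expr1 big1 ?mulr1 //.
by move=> j /negbTE ->; rewrite expr0.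
Qed.

Lemma Rep_add f h : Rep f -> Rep h -> Rep (fun x => f x + h x).
Proof.
move=> [Q1 H1] [Q2 H2]; exists (Q1 ++ Q2) => x Hx.
by rewrite /mpoly_eval big_cat /= H1 // H2.
Qed.

Lemma Rep_mul f h : Rep f -> Rep h -> Rep (fun x => f x * h x).
Proof.
move=> [Q1 H1] [Q2 H2].
exists [seq (t1.1 * t2.1, fun k => (t1.2 k + t2.2 k)%N) | t1 <- Q1, t2 <- Q2] => x Hx.
rewrite H1 // H2 // /mpoly_eval big_allpairs_dep /= mulr_suml; apply: eq_bigr => t1 _.
rewrite mulr_sumr; apply: eq_bigr => t2 _ /=.
rewrite [in RHS](eq_bigr (fun k => G x k ^+ t1.2 k * G x k ^+ t2.2 k)); last by move=> k _ /=; rewrite exprD.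
rewrite big_split /=; ring.
Qed.

Lemma Rep_sum N (F : nat -> X -> algC) : (forall i, (i < N)%N -> Rep (F i)) ->
  Rep (fun x => \sum_(i < N) F i x).
Proof.
elim: N => [|N IH] H.
  by eapply Rep_ext; [exact: (Rep_const 0)| move=> x _; rewrite big_ord0].
eapply Rep_ext; last by move=> x _; rewrite big_ord_recr.
apply: Rep_add; first by apply: IH => i Hi; apply: H; lia.
by apply: H.
Qed.

End RepTheory.


Section Main.
Variables n r p : nat.
Hypothesis Hr : (1 <= r)%N.
Hypothesis Hn : (2 * r <= n)%N.

Definition gens (x : 'I_r -> algC) : 'I_(p./2) -> algC :=
  fun k => powsum r (2 * k.+1) (fun i : 'I_r => x i + rho n i).
Definition RepX (f : ('I_r -> algC) -> algC) := Rep ('I_r -> algC) (generic n r) (p./2) gens f.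

Definition cc : algC := (n.-1)%:R / 2%:R.
Definition nun (x : 'I_r -> algC) (k : nat) : algC :=
  if (k < r)%N then xext r x k
  else if (n - r <= k)%N then - xext r x (n.-1 - k)
  else 0.
Definition yn x (k : nat) : algC := nun x k + (n.-1 - k)%:R - cc.
Definition yv x (i : 'I_n) : algC := yn x i.
Definition ys x := map (yv x) (index_enum 'I_n).

Lemma two_neq0 : (2%:R : algC) != 0.
Proof. by rewrite pnatr_eq0. Qed.

Lemma nm1 : (n.-1)%:R = n%:R - 1 :> algC.
Proof.
have H : n = (n.-1 + 1)%N by lia.
by rewrite {2}H natrD addrK.
Qed.

Lemma yv_diff x (i j : 'I_n) :
  yv x i - yv x j = nu n r x i - nu n r x j + j%:R - i%:R.
Proof.
rewrite /yv /yn /nu /nun !natrB; first ring.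
all: have := ltn_ord i; have := ltn_ord j; lia.
Qed.

Lemma yv_inj x : generic n r x -> injective (yv x).
Proof.
move=> Hg i j E; apply/eqP; apply/negPn/negP => Hij.
by move: (Hg i j Hij); rewrite -yv_diff E subrr eqxx.
Qed.

Lemma ys_uniq x : generic n r x -> uniq (ys x).
Proof. by move=> Hg; rewrite map_inj_uniq ?index_enum_uniq //; apply: yv_inj. Qed.

Lemma casimir_ys x : generic n r x ->
  casimir n p (nu n r x) = \sum_(y <- ys x) (y + cc) ^+ p * ww (ys x) y.
Proof.
move=> Hg; rewrite /ys big_map /casimir; apply: eq_bigr => i _.
rewrite /ww big_map.
have -> : nu n r x i + (n.-1 - i)%:R = yv x i + cc by rewrite /yv /yn subrK.
congr (_ * _).
apply: eq_big => [j|j _]; first by rewrite (inj_eq (@yv_inj x Hg)).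
by rewrite yv_diff.
Qed.

Lemma casimir_SS x : generic n r x ->
  casimir n p (nu n r x) = \sum_(m < p.+1) (cc ^+ (p - m) *+ 'C(p, m)) * SS (ys x) m.
Proof.
move=> Hg; rewrite casimir_ys //.
under eq_bigr do rewrite addrC exprDn mulr_suml.
rewrite exchange_big /=; apply: eq_bigr => m _.
rewrite /SS mulr_sumr; apply: eq_bigr => y _.
rewrite -(mulr_natl (cc ^+ (p - m) * y ^+ m)) -(mulr_natl (cc ^+ (p - m))); ring.
Qed.


Definition zz x (i : 'I_r) := x i + rho n i.
Definition Mid l : algC := \sum_(r <= k < n - r) ((n.-1 - k)%:R - cc) ^+ l.

Lemma xext_ord x (i : 'I_r) : xext r x i = x i.
Proof. by rewrite /xext valK. Qed.

Lemma Pw_dec x l : \sum_(y <- ys x) y ^+ l = powsum r l (zz x) * (1 + (-1) ^+ l) + Mid l.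
Proof.
rewrite /ys big_map.
have -> : \sum_(i <- index_enum 'I_n) yv x i ^+ l = \sum_(i < n) yn x i ^+ l by [].
rewrite -(big_mkord xpredT (fun k => yn x k ^+ l)).
rewrite (big_cat_nat _ (n:=r)) //=; last by lia.
rewrite (big_cat_nat _ (n:=n - r) (m:=r)) /=; [|lia|lia].
set A := \sum_(0 <= k < r) _. set B := \sum_(r <= k < n - r) _. set C := \sum_(n - r <= k < n) _.
have EA : A = powsum r l (zz x).
  rewrite /A big_mkord; apply: eq_bigr => i _.
  rewrite /yn /nun ltn_ord xext_ord /zz /rho natrB; last by have := ltn_ord i; lia.
  rewrite nm1 natrD natrM /cc nm1; congr (_ ^+ _); by field.
have EC : C = (-1) ^+ l * powsum r l (zz x).
  rewrite /C -{1}[(n - r)%N]add0n big_addn (_ : n - (n - r) = r)%N; last by lia.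
  rewrite big_nat_rev /= big_mkord /powsum mulr_sumr; apply: eq_bigr => i _.
  have Hi := ltn_ord i.
  rewrite (_ : (0 + r - i.+1 + (n - r) = n.-1 - i)%N); last by lia.
  rewrite /yn /nun.
  have /negbTE -> : ~~ (n.-1 - i < r)%N by lia.
  have -> : (n - r <= n.-1 - i)%N by lia.
  rewrite (_ : (n.-1 - (n.-1 - i) = i)%N); last by lia.
  rewrite xext_ord -exprMn; congr (_ ^+ _).
  rewrite /zz /rho /cc nm1 natrD natrM; by field.
have EB : B = Mid l.
  rewrite /B /Mid; apply: eq_big_nat => k Hk.
  rewrite /yn /nun.
  have /negbTE -> : ~~ (k < r)%N by lia.
  have /negbTE -> : ~~ (n - r <= k)%N by lia.
  by rewrite add0r.
rewrite EA EB EC; ring.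
Qed.

Lemma RX_ext {f f'} : RepX f -> (forall x, generic n r x -> f x = f' x) -> RepX f'.
Proof. exact: Rep_ext. Qed.
Lemma RX_const c : RepX (fun _ => c).
Proof. exact: Rep_const. Qed.
Lemma RX_add {f h} : RepX f -> RepX h -> RepX (fun x => f x + h x).
Proof. exact: Rep_add. Qed.
Lemma RX_mul {f h} : RepX f -> RepX h -> RepX (fun x => f x * h x).
Proof. exact: Rep_mul. Qed.
Lemma RX_sum N (F : nat -> ('I_r -> algC) -> algC) : (forall i, (i < N)%N -> RepX (F i)) ->
  RepX (fun x => \sum_(i < N) F i x).
Proof. exact: Rep_sum. Qed.

Lemma Rep_ps l : (l <= p)%N -> RepX (fun x => powsum r l (zz x) * (1 + (-1) ^+ l)).
Proof.
move=> Hl; case Ho: (odd l).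
  apply: (RX_ext (RX_const 0)) => x _.
  by rewrite -signr_odd Ho expr1 addrN mulr0.
have El : l = (l./2).*2 by rewrite -{1}(odd_double_half l) Ho add0n.
rewrite -signr_odd Ho expr0.
case Eh: (l./2) => [|k].
  apply: (RX_ext (RX_const (r%:R * (1 + 1)))) => x _.
  rewrite El Eh /powsum.
  by under eq_bigr do rewrite expr0; rewrite sumr_const card_ord mulr_natl.
have Hk : (k < p./2)%N by rewrite -ltnS -Eh; apply: half_leq.
apply: (RX_ext (RX_mul (Rep_gen _ _ _ gens (Ordinal Hk)) (RX_const (1 + 1)))) => x _.
by rewrite /gens /= El Eh -mul2n.
Qed.

Lemma Rep_Pw l : (l <= p)%N -> RepX (fun x => \sum_(y <- ys x) y ^+ l).
Proof.
move=> Hl; apply: (RX_ext (RX_add (@Rep_ps l Hl) (RX_const (Mid l)))) => x _.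
by rewrite Pw_dec.
Qed.

Lemma qq_P (s : seq algC) k : qq s k = - \sum_(l < k) (\sum_(y <- s) y ^+ l) * 'C(k, l)%:R.
Proof.
rewrite /qq (eq_bigr (fun y => - \sum_(l < k) y ^+ l *+ 'C(k, l))); last first.
  by move=> y _; rewrite exprD1n big_ord_recr /= binn mulr1n; ring.
rewrite sumrN exchange_big /=; congr (- _); apply: eq_bigr => l _.
by rewrite mulr_natr sumrMnl.
Qed.

Lemma Rep_qq k : (k <= p.+1)%N -> RepX (fun x => qq (ys x) k).
Proof.
move=> Hk.
have HS : RepX (fun x => \sum_(l < k) (\sum_(y <- ys x) y ^+ l) * 'C(k, l)%:R).
  apply: (@RX_sum k (fun l x => (\sum_(y <- ys x) y ^+ l) * 'C(k, l)%:R)) => l Hl.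
  apply: RX_mul; last exact: RX_const.
  apply: Rep_Pw; lia.
apply: (RX_ext (RX_mul (RX_const (-1)) HS)).
by move=> x _; rewrite qq_P mulN1r.
Qed.

Lemma Rep_gg M : (M <= p.+1)%N -> RepX (fun x => gg (ys x) M).
Proof.
elim: M {-2}M (leqnn M) => [|N IH] M HMN HM.
  have -> : M = 0%N by lia.
  exact: RX_const.
case: M HMN HM => [|M] HMN HM; first exact: RX_const.
have HS : RepX (fun x => \sum_(k < M.+1) qq (ys x) k.+1 * gg (ys x) (M.+1 - k.+1)).
  apply: (@RX_sum M.+1 (fun k x => qq (ys x) k.+1 * gg (ys x) (M.+1 - k.+1))) => k Hk.
  apply: RX_mul.
    apply: Rep_qq; lia.
  apply: IH; lia.
apply: (RX_ext (RX_mul (RX_const (M.+1%:R^-1)) HS)).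
move=> x Hg; rewrite -(@NP_g _ (@ys_uniq x Hg)) mulKf //.
by rewrite pnatr_eq0.
Qed.

Lemma Rep_casimir : RepX (fun x => casimir n p (nu n r x)).
Proof.
have HS : RepX (fun x => \sum_(m < p.+1) (cc ^+ (p - m) *+ 'C(p, m)) * SS (ys x) m).
  apply: (@RX_sum p.+1 (fun m x => (cc ^+ (p - m) *+ 'C(p, m)) * SS (ys x) m)) => m Hm.
  apply: RX_mul; first exact: RX_const.
  apply: (RX_ext (RX_mul (RX_const (-1)) (@Rep_gg m.+1 Hm))).
  by move=> x _; rewrite /gg mulN1r opprK.
apply: (RX_ext HS).
by move=> x Hg; rewrite casimir_SS.
Qed.

End Main.

Theorem mainTheorem3 (r n p : nat) :
  (1 <= r)%N -> (2 * r <= n)%N -> (1 <= p)%N ->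
  exists Q : seq (algC * ('I_(p./2) -> nat)),
    forall x : 'I_r -> algC, generic n r x ->
      casimir n p (nu n r x) =
      mpoly_eval (p./2) Q (fun k : 'I_(p./2) =>
        powsum r (2 * k.+1) (fun i : 'I_r => x i + rho n i)).
Proof.
move=> Hr Hn Hp.
have [Q HQ] := @Rep_casimir n r p Hr Hn.
by exists Q.
Qed.
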